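(* Let $\lambda>0$, $\gamma>0$, $\beta\ge 0$. Let $X$ be the Banach space of bounded analytic functions $h:[0,\lambda]\to\mathbb{R}$ with the supremum norm, $K=\{h\in X: h\ge 0,\ \|h\|_\infty\le 1\}$, and for $h\in K$ let $\Psi_h=1+\beta h$, $$D_h=\gamma\left(1+\gamma\int_0^\lambda\frac{\exp\left(-2\int_0^x\frac{\xi}{\Psi_h(\xi)}d\xi\right)}{\Psi_h(x)}\,dx\right)^{-1},$$ and define the operator $\tau:K\to X$ by $$(\tau h)(\eta)=D_h\left(\frac1\gamma+\int_0^\eta\frac{\exp\left(-2\int_0^x\frac{\xi}{\Psi_h(\xi)}d\xi\right)}{\Psi_h(x)}\,dx\right),\quad 0<\eta<\lambda.$$ Let $y\in K$. Then $y$ is a solution of \begin{align*} &[(1+\beta y(\eta))y'(\eta)]'+2\eta y'(\eta)=0, \quad 0<\eta<\lambda,\\ &y'(0)+\beta y(0)y'(0)-\gamma y(0)=0,\\ &y(\lambda)=1, \end{align*} if and only if $y$ is a fixed point of $\tau$. *)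

(* Defs.v *)
From Stdlib Require Import Reals.
From Coquelicot Require Import Coquelicot.
Open Scope R_scope.

Definition analytic_on_closed (lam : R) (h : R -> R) : Prop :=
  forall x0, 0 <= x0 <= lam ->
    exists (a : nat -> R) (r : R), 0 < r /\
      forall x, Rabs (x - x0) < r -> is_pseries a (x - x0) (h x).

Definition in_X (lam : R) (h : R -> R) : Prop :=
  analytic_on_closed lam h /\
  exists M, forall x, 0 <= x <= lam -> Rabs (h x) <= M.

Definition in_K (lam : R) (h : R -> R) : Prop :=
  in_X lam h /\ forall x, 0 <= x <= lam -> 0 <= h x <= 1.

Definition Psi (beta : R) (h : R -> R) (x : R) : R := 1 + beta * h x.

Definition integrand (beta : R) (h : R -> R) (x : R) : R :=
  exp (-2 * RInt (fun xi => xi / Psi beta h xi) 0 x) / Psi beta h x.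

Definition D_h (lam gamma beta : R) (h : R -> R) : R :=
  gamma / (1 + gamma * RInt (integrand beta h) 0 lam).

Definition tau (lam gamma beta : R) (h : R -> R) (eta : R) : R :=
  D_h lam gamma beta h * (1 / gamma + RInt (integrand beta h) 0 eta).

Definition is_solution (lam gamma beta : R) (y : R -> R) : Prop :=
  (forall eta, 0 < eta < lam ->
     ex_derive y eta /\
     ex_derive (fun x => (1 + beta * y x) * Derive y x) eta /\
     Derive (fun x => (1 + beta * y x) * Derive y x) eta
       + 2 * eta * Derive y eta = 0) /\
  (ex_derive y 0 /\
   Derive y 0 + beta * y 0 * Derive y 0 - gamma * y 0 = 0) /\
  y lam = 1.

(* y is a fixed point of tau (equality as elements of X, i.e. on [0, lam]). *)
Definition is_fixed_point (lam gamma beta : R) (y : R -> R) : Prop :=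
  forall eta, 0 <= eta <= lam -> y eta = tau lam gamma beta y eta.

(* Main.v *)
Require Import Defs.
From Stdlib Require Import Reals Lra.
From Coquelicot Require Import Coquelicot.
Open Scope R_scope.

Lemma radius_ge (a : nat -> R) (r : R) :
  0 < r -> (forall z, Rabs z < r -> ex_pseries a z) ->
  forall z, Rabs z < r -> Rbar_lt (Rabs z) (CV_radius a).
Proof.
  intros Hr H z Hz.
  assert (H0 := CV_radius_ge_0 a).
  destruct (CV_radius a) as [c| |] eqn:E; simpl in *; try easy.
  destruct (Rlt_dec (Rabs z) c) as [h|h]; [exact h|].
  exfalso.
  set (w := (c + r) / 2).
  assert (Hw : Rabs w = w) by (apply Rabs_pos_eq; unfold w; lra).
  assert (Hwr : Rabs w < r) by (rewrite Hw; unfold w; lra).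
  apply (CV_disk_outside a w).
  - rewrite E; simpl; rewrite Hw; unfold w; lra.
  - apply ex_series_lim_0.
    destruct (H w Hwr) as [l Hl].
    exists l. eapply is_series_ext; [|exact Hl].
    intros n; simpl. rewrite pow_n_pow. unfold scal; simpl. unfold mult; simpl. ring.
Qed.

Lemma loc_ball (x0 r x : R) : Rabs (x - x0) < r ->
  locally x (fun t => Rabs (t - x0) < r).
Proof.
  intros H. apply (locally_interval _ x (x0 - r) (x0 + r)); simpl.
  - apply Rabs_def2 in H; lra.
  - apply Rabs_def2 in H; lra.
  - intros t H1 H2. apply Rabs_def1; lra.
Qed.

Lemma local_an (lam : R) (y : R -> R) : analytic_on_closed lam y ->
  forall x0, 0 <= x0 <= lam -> exists r, 0 < r /\
   forall x, Rabs (x - x0) < r -> continuity_pt y x /\ ex_derive y x.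
Proof.
  intros Han x0 Hx0.
  destruct (Han x0 Hx0) as (a & r & Hr & Hs).
  exists r; split; auto.
  assert (Hrad : forall z, Rabs z < r -> Rbar_lt (Rabs z) (CV_radius a)).
  { apply radius_ge; auto. intros z Hz. exists (y (z + x0)).
    assert (E : z = z + x0 - x0) by ring.
    pose proof (Hs (z + x0)) as Hz'. rewrite <- E in Hz'. now apply Hz'. }
  assert (Heq : forall x, Rabs (x - x0) < r -> PSeries a (x - x0) = y x).
  { intros x Hx. apply is_pseries_unique. auto. }
  intros x Hx.
  assert (Hloc := loc_ball x0 r x Hx).
  split.
  - apply continuity_pt_filterlim.
    apply (continuous_ext_loc _ (fun t => PSeries a (t - x0))).
    + eapply filter_imp; [|exact Hloc]. intros t Ht. now apply Heq.
    + apply continuity_pt_filterlim.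
      apply (continuity_pt_comp (fun t => t - x0) (PSeries a)).
      * apply continuity_pt_minus; [apply continuity_pt_id | apply continuity_pt_const; intros u v; auto].
      * apply PSeries_continuity. apply Hrad; exact Hx.
  - apply (ex_derive_ext_loc (fun t => PSeries a (t - x0))).
    + eapply filter_imp; [|exact Hloc]. intros t Ht. now apply Heq.
    + apply (ex_derive_comp (PSeries a) (fun t => t - x0)).
      * apply ex_derive_PSeries. apply Hrad; exact Hx.
      * apply (ex_derive_minus (fun t => t) (fun _ => x0)); [apply ex_derive_id|apply ex_derive_const].
Qed.

Lemma ball_R (x e t : R) : Rabs (t - x) < e -> @ball R_UniformSpace x e t.
Proof. intros H. exact H. Qed.

Lemma Psi_near (beta : R) (y : R -> R) x0 : continuity_pt y x0 -> 1 <= Psi beta y x0 ->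
  exists e, 0 < e /\ forall x, Rabs (x - x0) < e -> 1/2 < Psi beta y x.
Proof.
  intros Hc H1.
  assert (Hp : continuity_pt (Psi beta y) x0).
  { unfold Psi. apply continuity_pt_plus. apply continuity_pt_const; intros u v; auto.
    apply continuity_pt_scal. exact Hc. }
  assert (Hhalf : 0 < /2) by lra.
  destruct (proj1 (continuity_pt_locally _ _) Hp (mkposreal _ Hhalf)) as [e He].
  exists e; split; [apply cond_pos|].
  intros x Hx. specialize (He x (ball_R _ _ _ Hx)). simpl in He.
  apply Rabs_def2 in He. lra.
Qed.

Lemma interval_good (lam beta : R) (y : R -> R) : 0 < lam -> 0 <= beta -> in_K lam y ->
  exists a0 b0, a0 < 0 /\ lam < b0 /\ ex_derive y 0 /\
   forall x, a0 < x < b0 -> continuity_pt y x /\ 0 < Psi beta y x.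
Proof.
  intros Hl Hb [[Han _] Hbd].
  assert (Hpos : forall x, 0 <= x <= lam -> 1 <= Psi beta y x).
  { intros x Hx. unfold Psi. specialize (Hbd x Hx). nra. }
  assert (H0 : 0 <= 0 <= lam) by lra.
  assert (HL : 0 <= lam <= lam) by lra.
  destruct (local_an lam y Han 0 H0) as (r0 & Hr0 & C0).
  destruct (local_an lam y Han lam HL) as (rl & Hrl & CL).
  assert (Rabs (0 - 0) < r0) by (rewrite Rminus_0_r, Rabs_R0; lra).
  assert (Rabs (lam - lam) < rl) by (rewrite Rminus_diag, Rabs_R0; lra).
  destruct (Psi_near beta y 0 (proj1 (C0 0 H)) (Hpos 0 H0)) as (e0 & He0 & P0).
  destruct (Psi_near beta y lam (proj1 (CL lam H1)) (Hpos lam HL)) as (el & Hel & PL).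
  exists (- Rmin r0 e0 / 2), (lam + Rmin rl el / 2).
  assert (0 < Rmin r0 e0) by (apply Rmin_glb_lt; lra).
  assert (0 < Rmin rl el) by (apply Rmin_glb_lt; lra).
  assert (Rmin r0 e0 <= r0) by apply Rmin_l.
  assert (Rmin r0 e0 <= e0) by apply Rmin_r.
  assert (Rmin rl el <= rl) by apply Rmin_l.
  assert (Rmin rl el <= el) by apply Rmin_r.
  split; [lra|]. split; [lra|]. split; [exact (proj2 (C0 0 H))|].
  intros x Hx.
  destruct (Rlt_le_dec x 0) as [Hx0|Hx0].
  { assert (Rabs (x - 0) < r0) by (apply Rabs_def1; lra).
    assert (Rabs (x - 0) < e0) by (apply Rabs_def1; lra).
    split; [apply C0; auto|]. specialize (P0 x H9). lra. }
  destruct (Rle_lt_dec x lam) as [Hxl|Hxl].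
  { assert (Hxx : 0 <= x <= lam) by lra.
    destruct (local_an lam y Han x Hxx) as (rx & Hrx & Cx).
    split; [apply Cx; rewrite Rminus_diag, Rabs_R0; lra|]. specialize (Hpos x Hxx). lra. }
  { assert (Rabs (x - lam) < rl) by (apply Rabs_def1; lra).
    assert (Rabs (x - lam) < el) by (apply Rabs_def1; lra).
    split; [apply CL; auto|]. specialize (PL x H9). lra. }
Qed.

Lemma deriv_RInt0 (f : R -> R) (a0 b0 : R) : a0 < 0 -> 0 < b0 ->
  (forall x, a0 < x < b0 -> continuity_pt f x) ->
  forall x, a0 < x < b0 -> is_derive (fun t => RInt f 0 t) x (f x).
Proof.
  intros Ha Hb Hc x Hx.
  apply (is_derive_RInt f (fun t => RInt f 0 t) 0 x).
  - apply (locally_interval _ x a0 b0); simpl; try lra.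
    intros b H1 H2. apply (RInt_correct (V := R_CompleteNormedModule)).
    apply ex_RInt_continuous. intros z Hz.
    apply continuity_pt_filterlim. apply Hc.
    unfold Rmin, Rmax in Hz; destruct (Rle_dec 0 b); lra.
  - apply continuity_pt_filterlim. apply Hc; auto.
Qed.

Definition gf (beta : R) (y : R -> R) := fun xi => xi / Psi beta y xi.

Lemma calc (beta : R) (y : R -> R) (a0 b0 : R) : a0 < 0 -> 0 < b0 ->
  (forall x, a0 < x < b0 -> continuity_pt y x /\ 0 < Psi beta y x) ->
  (forall x, a0 < x < b0 -> is_derive (fun t => RInt (gf beta y) 0 t) x (gf beta y x)) /\
  (forall x, a0 < x < b0 -> continuity_pt (integrand beta y) x) /\
  (forall x, a0 < x < b0 -> is_derive (fun t => RInt (integrand beta y) 0 t) x (integrand beta y x)).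
Proof.
  intros Ha Hb HP.
  assert (CPsi : forall x, a0 < x < b0 -> continuity_pt (Psi beta y) x).
  { intros x Hx. unfold Psi. apply continuity_pt_plus. apply continuity_pt_const; intros u v; auto.
    apply continuity_pt_scal. apply HP; auto. }
  assert (D1 : forall x, a0 < x < b0 -> is_derive (fun t => RInt (gf beta y) 0 t) x (gf beta y x)).
  { apply deriv_RInt0; auto. intros x Hx. unfold gf.
    apply (continuity_pt_div (fun xi => xi) (Psi beta y)).
    apply continuity_pt_id. apply CPsi; auto. specialize (HP x Hx). lra. }
  assert (C2 : forall x, a0 < x < b0 -> continuity_pt (integrand beta y) x).
  { intros x Hx. unfold integrand.
    apply (continuity_pt_div (fun x => exp (-2 * RInt (fun xi => xi / Psi beta y xi) 0 x)) (Psi beta y)).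
    - apply (continuity_pt_comp (fun x => -2 * RInt (fun xi => xi / Psi beta y xi) 0 x) exp).
      + apply continuity_pt_scal. apply continuity_pt_filterlim.
        apply (ex_derive_continuous (fun t => RInt (gf beta y) 0 t)).
        eexists. apply D1; auto.
      + apply derivable_continuous_pt. apply derivable_pt_exp.
    - apply CPsi; auto.
    - specialize (HP x Hx). lra. }
  split; [exact D1|]. split; [exact C2|].
  apply deriv_RInt0; auto.
Qed.

Lemma right_unique (f h : R -> R) (l1 l2 d : R) : 0 < d ->
  is_derive f 0 l1 -> is_derive h 0 l2 -> (forall x, 0 <= x < d -> f x = h x) -> l1 = l2.
Proof.
  intros Hd H1 H2 He.
  assert (H := is_derive_minus _ _ _ _ _ H1 H2).
  apply is_derive_Reals in H.
  destruct (Req_dec l1 l2) as [E|E]; auto. exfalso.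
  assert (Hp : 0 < Rabs (minus l1 l2)).
  { apply Rabs_pos_lt. unfold minus, plus, opp; simpl. lra. }
  destruct (H _ Hp) as [del Hdel].
  set (h0 := Rmin del d / 2).
  assert (0 < Rmin del d) by (apply Rmin_glb_lt; [apply cond_pos|lra]).
  assert (Rmin del d <= del) by apply Rmin_l.
  assert (Rmin del d <= d) by apply Rmin_r.
  assert (Hh0 : h0 <> 0) by (unfold h0; lra).
  assert (Habs : Rabs h0 < del) by (rewrite Rabs_pos_eq; unfold h0; lra).
  specialize (Hdel h0 Hh0 Habs).
  rewrite Rplus_0_l in Hdel.
  rewrite (He h0), (He 0) in Hdel by (unfold h0; lra).
  unfold minus, plus, opp in *; simpl in *.
  replace ((h h0 + - h h0 - (h 0 + - h 0)) / h0 - (l1 + - l2)) with (- (l1 + - l2)) in Hdel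
    by (field; auto).
  rewrite Rabs_Ropp in Hdel. lra.
Qed.

Lemma deriv_tau (beta gamma D : R) (y : R -> R) (x : R) :
  is_derive (fun t => RInt (integrand beta y) 0 t) x (integrand beta y x) ->
  is_derive (fun t => D * (1 / gamma + RInt (integrand beta y) 0 t)) x (D * integrand beta y x).
Proof.
  intros H. apply is_derive_scal.
  assert (H' := is_derive_plus (fun _ => 1 / gamma) _ x _ _ (is_derive_const (1/gamma) x) H).
  simpl in H'. unfold plus, zero in H'; simpl in H'. rewrite Rplus_0_l in H'. exact H'.
Qed.

Lemma deriv_expG (beta D : R) (y : R -> R) (x : R) :
  is_derive (fun t => RInt (gf beta y) 0 t) x (gf beta y x) ->
  is_derive (fun t => D * exp (-2 * RInt (gf beta y) 0 t)) x
    (D * (exp (-2 * RInt (gf beta y) 0 x) * (-2 * gf beta y x))).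
Proof.
  intros H. apply is_derive_scal.
  assert (H2 : is_derive (fun t => -2 * RInt (gf beta y) 0 t) x (-2 * gf beta y x))
    by (apply is_derive_scal; exact H).
  assert (H3 := is_derive_comp exp _ x _ _ (is_derive_exp _) H2).
  simpl in H3. unfold scal in H3; simpl in H3; unfold mult in H3; simpl in H3.
  rewrite Rmult_comm. exact H3.
Qed.

Lemma deriv_expk (beta k : R) (y : R -> R) (x : R) :
  is_derive (fun t => RInt (gf beta y) 0 t) x (gf beta y x) ->
  is_derive (fun t => exp (k * RInt (gf beta y) 0 t)) x
    (exp (k * RInt (gf beta y) 0 x) * (k * gf beta y x)).
Proof.
  intros H.
  assert (H2 : is_derive (fun t => k * RInt (gf beta y) 0 t) x (k * gf beta y x))
    by (apply is_derive_scal; exact H).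
  assert (H3 := is_derive_comp exp _ x _ _ (is_derive_exp _) H2).
  simpl in H3. unfold scal in H3; simpl in H3; unfold mult in H3; simpl in H3.
  rewrite Rmult_comm. exact H3.
Qed.

Lemma deriv_affine (Fn : R -> R) (a c x l : R) :
  is_derive Fn x l -> is_derive (fun t => a + c * Fn t) x (c * l).
Proof.
  intros H. assert (H1 := is_derive_scal _ _ c _ H).
  assert (H' := is_derive_plus (fun _ => a) _ x _ _ (is_derive_const a x) H1).
  simpl in H'. unfold plus, zero in H'; simpl in H'. rewrite Rplus_0_l in H'. exact H'.
Qed.

Theorem theorem3p2 (lam gamma beta : R) (y : R -> R)
  (Hlam : 0 < lam) (Hgamma : 0 < gamma) (Hbeta : 0 <= beta)
  (Hy : in_K lam y) :
  is_solution lam gamma beta y <-> is_fixed_point lam gamma beta y.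
Proof.
  destruct (interval_good lam beta y Hlam Hbeta Hy) as (a0 & b0 & Ha0 & Hb0 & Hd0 & HP).
  destruct (calc beta y a0 b0 Ha0 ltac:(lra) HP) as (DG & CI & DF).
  set (G := fun t => RInt (gf beta y) 0 t).
  set (F := fun t => RInt (integrand beta y) 0 t).
  assert (G0 : G 0 = 0) by (unfold G; rewrite RInt_point; reflexivity).
  assert (F0 : F 0 = 0) by (unfold F; rewrite RInt_point; reflexivity).
  assert (Hint : forall x, integrand beta y x = exp (-2 * G x) / Psi beta y x) by reflexivity.
  assert (Ipos : 0 <= F lam).
  { unfold F. apply RInt_ge_0; [lra| |].
    - apply (ex_RInt_continuous (V := R_CompleteNormedModule)). intros z Hz. apply continuity_pt_filterlim. apply CI.
      unfold Rmin, Rmax in Hz; destruct (Rle_dec 0 lam); lra.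
    - intros x Hx. rewrite Hint. apply Rlt_le. apply Rdiv_lt_0_compat. apply exp_pos.
      apply HP; lra. }
  assert (HD : D_h lam gamma beta y = gamma / (1 + gamma * F lam)) by reflexivity.
  assert (Htau : forall x, tau lam gamma beta y x = D_h lam gamma beta y * (1 / gamma + F x)) by reflexivity.
  assert (Hden : 0 < 1 + gamma * F lam) by nra.
  split.
  - intros (Hode & (Hd0' & HBC) & Hyl).
    set (u := fun x => (1 + beta * y x) * Derive y x).
    set (w := fun x => u x * exp (2 * G x)).
    assert (Dw : forall x, 0 < x < lam -> is_derive w x 0).
    { intros x Hx. destruct (Hode x Hx) as (Ey & Eu & Eq).
      apply Derive_correct in Eu.
      assert (He := deriv_expk beta 2 y x (DG x ltac:(lra))).
      assert (Hm := is_derive_mult _ _ x _ _ Eu He (fun n m => Rmult_comm n m)).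
      unfold plus, mult in Hm; simpl in Hm.
      replace 0 with (Derive u x * exp (2 * G x) + u x * (exp (2 * RInt (gf beta y) 0 x) * (2 * gf beta y x))).
      exact Hm.
      unfold u at 2. fold u in Eq. 
      change (RInt (gf beta y) 0 x) with (G x). unfold gf.
      assert (0 < Psi beta y x) by (apply HP; lra). unfold Psi in *.
      replace (Derive u x) with (- (2 * x * Derive y x)) by lra. field. lra. }
    assert (Cw : forall x, 0 < x < lam -> w x = w (lam / 2)).
    { intros x Hx.
      destruct (MVT_gen w x (lam / 2) (fun _ => 0)) as (c & _ & Hc).
      - intros z Hz. apply Dw. unfold Rmin, Rmax in Hz; destruct (Rle_dec x (lam/2)); lra.
      - intros z Hz. apply continuity_pt_filterlim. apply (ex_derive_continuous w). eexists; apply Dw.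
        unfold Rmin, Rmax in Hz; destruct (Rle_dec x (lam/2)); lra.
      - lra. }
    set (c := w (lam / 2)) in *.
    assert (Dy : forall x, 0 < x < lam -> Derive y x = c * integrand beta y x).
    { intros x Hx. rewrite <- (Cw x Hx). unfold w, u. rewrite Hint.
      assert (0 < Psi beta y x) by (apply HP; lra). unfold Psi in *.
      assert (E : exp (2 * G x) * exp (-2 * G x) = 1)
        by (rewrite <- exp_plus; replace (2 * G x + -2 * G x) with 0 by ring; apply exp_0).
      symmetry.
      transitivity (Derive y x * (exp (2 * G x) * exp (-2 * G x)) * ((1 + beta * y x) / (1 + beta * y x))).
      field; lra. rewrite E. field; lra. }
    set (f := fun x => y x - c * F x).
    assert (Df : forall x, 0 < x < lam -> is_derive f x 0).
    { intros x Hx. destruct (Hode x Hx) as (Ey & _ & _).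
      apply Derive_correct in Ey.
      assert (H1 := is_derive_scal _ _ c _ (DF x ltac:(lra))).
      assert (Hm := is_derive_minus _ _ x _ _ Ey H1).
      unfold minus, plus, opp in Hm; simpl in Hm. rewrite Dy in Hm by lra.
      replace 0 with (c * integrand beta y x + - (c * integrand beta y x)) by ring. exact Hm. }
    assert (Yf : forall eta, 0 <= eta <= lam -> y eta = y 0 + c * F eta).
    { intros eta Heta. destruct (Req_dec eta 0) as [->|Hne].
      { rewrite F0; ring. }
      destruct (MVT_gen f 0 eta (fun _ => 0)) as (z & _ & Hz).
      - intros z Hz. apply Df. unfold Rmin, Rmax in Hz; destruct (Rle_dec 0 eta); lra.
      - intros z Hz. assert (Hz' : a0 < z < b0)
          by (unfold Rmin, Rmax in Hz; destruct (Rle_dec 0 eta); lra).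
        apply continuity_pt_minus. apply HP; auto.
        apply continuity_pt_scal. apply continuity_pt_filterlim.
        apply (ex_derive_continuous F). eexists; apply DF; auto.
      - unfold f in Hz. rewrite F0 in Hz. lra. }
    assert (Hd1 : Derive y 0 = c * integrand beta y 0).
    { apply (right_unique y (fun t => y 0 + c * F t) _ _ lam Hlam).
      apply Derive_correct; auto. apply deriv_affine. apply DF; lra.
      intros x Hx. apply Yf. lra. }
    rewrite Hint, G0, Rmult_0_r, exp_0 in Hd1.
    assert (0 < Psi beta y 0) by (apply HP; lra). unfold Psi in *.
    assert (Hc : c = gamma * y 0).
    { rewrite Hd1 in HBC.
      assert (E : c * (1 / (1 + beta * y 0)) + beta * y 0 * (c * (1 / (1 + beta * y 0))) = c)
        by (field; lra). lra. }
    assert (Y0 : y 0 * (1 + gamma * F lam) = 1).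
    { assert (H1 := Yf lam ltac:(lra)). rewrite Hyl, Hc in H1. nra. }
    intros eta Heta. rewrite Htau, HD, (Yf eta Heta), Hc.
    replace (y 0) with (1 / (1 + gamma * F lam)) by (apply (Rmult_eq_reg_r (1 + gamma * F lam)); [rewrite Y0; field; lra | lra]).
    field. split; lra.
  - intros Hfix. unfold is_fixed_point in Hfix.
    set (D := D_h lam gamma beta y) in *.
    assert (Dy : forall x, 0 < x < lam -> is_derive y x (D * integrand beta y x)).
    { intros x Hx. apply (is_derive_ext_loc (fun t => D * (1 / gamma + F t))).
      - apply (locally_interval _ x 0 lam); simpl; try lra.
        intros t H1 H2. rewrite Hfix by lra. rewrite Htau. reflexivity.
      - apply deriv_tau. apply DF; lra. }
    split; [|split].
    + intros eta Heta.
      assert (Hu : locally eta (fun x => D * exp (-2 * G x) = (1 + beta * y x) * Derive y x)).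
      { apply (locally_interval _ eta 0 lam); simpl; try lra.
        intros t H1 H2. rewrite (is_derive_unique _ _ _ (Dy t (conj H1 H2))).
        rewrite Hint. assert (0 < Psi beta y t) by (apply HP; lra). unfold Psi in *. field. lra. }
      assert (Hd := deriv_expG beta D y eta (DG eta ltac:(lra))).
      assert (Hd2 := is_derive_ext_loc _ _ _ _ Hu Hd).
      split; [eexists; apply Dy; exact Heta|].
      split; [eexists; exact Hd2|].
      assert (E : Derive (fun x => (1 + beta * y x) * Derive y x) eta =
        D * (exp (-2 * RInt (gf beta y) 0 eta) * (-2 * gf beta y eta)))
        by (apply is_derive_unique; exact Hd2).
      rewrite E. rewrite (is_derive_unique _ _ _ (Dy eta Heta)).
      rewrite Hint. unfold gf. fold G.
      assert (0 < Psi beta y eta) by (apply HP; lra). change (RInt (fun xi => xi / Psi beta y xi) 0 eta) with (G eta). field. lra.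
    + assert (Hd1 : is_derive y 0 (D * integrand beta y 0)).
      { apply Derive_correct in Hd0.
        rewrite <- (right_unique y (fun t => D * (1 / gamma + F t)) (Derive y 0) (D * integrand beta y 0) lam Hlam Hd0).
        exact Hd0. apply deriv_tau. apply DF; lra.
        intros x Hx. rewrite Hfix by lra. apply Htau. }
      split; [eexists; exact Hd1|].
      rewrite (is_derive_unique _ _ _ Hd1).
      assert (Y0 : y 0 = D * (1 / gamma)) by (rewrite Hfix by lra; rewrite Htau, F0; ring).
      rewrite Y0, Hint, G0, Rmult_0_r, exp_0.
      assert (0 < Psi beta y 0) by (apply HP; lra).
      unfold Psi in *. rewrite Y0 in *. field. split; [lra|]. assert (E2 : gamma + beta * D = gamma * (1 + beta * (D * (1 / gamma)))) by (field; lra). rewrite E2. apply Rgt_not_eq. apply Rmult_lt_0_compat; lra.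
    + rewrite Hfix by lra. rewrite Htau. rewrite HD. field. split; lra.
Qed.
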